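(* Let $\mathbb{F}$ be a field, $n\ge4$, and let $g_1,g_2\in\mathrm{GL}_n(\mathbb{F})$ both have minimal polynomials of degree $2$. Then $\langle g_1,g_2\rangle$ does not act absolutely irreducibly on $\mathbb{F}^n$. *)

(* Defs.v *)
From HB Require Import structures.
From mathcomp Require Import all_boot all_order all_algebra.
Set Implicit Arguments. Unset Strict Implicit. Unset Printing Implicit Defensive.
Import GRing.Theory.
Local Open Scope ring_scope.

(* Matrices act on row vectors from the right (MathComp convention): v |-> v *m g. *)

Inductive in_gen_group (K : fieldType) (n : nat) (S : seq 'M[K]_n) : 'M[K]_n -> Prop :=
  | gen_one : in_gen_group S 1%:M
  | gen_mul g h : g \in S -> in_gen_group S h -> in_gen_group S (g *m h)
  | gen_mulV g h : g \in S -> in_gen_group S h -> in_gen_group S (invmx g *m h).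

Definition gen_invariant (K : fieldType) (n : nat) (S : seq 'M[K]_n) (W : 'M[K]_n) : Prop :=
  forall h, in_gen_group S h -> (W *m h <= W)%MS.

Definition gen_irreducible (K : fieldType) (n : nat) (S : seq 'M[K]_n) : Prop :=
  (0 < n)%N /\
  forall W : 'M[K]_n, gen_invariant S W -> W = 0 \/ row_full W.

Definition gen_abs_irreducible (F : fieldType) (n : nat) (S : seq 'M[F]_n) : Prop :=
  forall (K : fieldType) (f : {rmorphism F -> K}),
    gen_irreducible [seq map_mx f g | g <- S].

(* Main.v *)
Require Import Defs.
From HB Require Import structures.
From mathcomp Require Import all_boot all_order all_algebra all_field.
Set Implicit Arguments. Unset Strict Implicit. Unset Printing Implicit Defensive.
Import GRing.Theory.
Local Open Scope ring_scope.
From Stdlib Require Import Classical.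
Import Pdiv.Field.

Lemma irr_factor (F : fieldType) k (p : {poly F}) : (size p <= k)%N -> (1 < size p)%N ->
  exists q : {poly F}, [/\ irreducible_poly q, q \is monic & q %| p].
Proof.
elim: k p => [|k IH] p hk hp; first by move: hk hp; rewrite leqn0 => /eqP ->.
have p0 : p != 0 by rewrite -size_poly_gt0 (ltn_trans _ hp).
case: (classic (irreducible_poly p)) => [ip | nip].
  exists ((lead_coef p)^-1 *: p); split.
  - have c0 : (lead_coef p)^-1 != 0 by rewrite invr_eq0 lead_coef_eq0.
    split; first by rewrite size_scale.
    move=> q sq; rewrite dvdpZr // => /(ip q sq) e.
    by apply: (eqp_trans e); rewrite eqp_sym eqp_scale.
  - by apply/monicP; rewrite lead_coefZ mulVf // lead_coef_eq0.
  - by rewrite dvdpZl // invr_eq0 lead_coef_eq0.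
have [q [hq1 hq2 hq3]] : exists q : {poly F}, [/\ size q != 1%N, q %| p & ~~ (q %= p)].
  apply: NNPP => H; apply: nip; split => // q s1 d; apply: NNPP => nq.
  by apply: H; exists q; split => //; apply/negP.
have q0 : q != 0 by apply: contra_neq p0 => q0; move: hq2; rewrite q0 dvd0p => /eqP.
have sq : (1 < size q)%N.
  by move: hq1; rewrite ltn_neqAle eq_sym => ->; rewrite size_poly_gt0.
have sqp : (size q < size p)%N.
  rewrite ltn_neqAle dvdp_leq // andbT; apply: contra hq3 => /eqP e.
  by rewrite -dvdp_size_eqp // e.
have [r [r1 r2 r3]] := IH q (leq_trans (leq_trans sqp hk) (leqnn _)) sq.
by exists r; split => //; apply: dvdp_trans r3 hq2.
Qed.
From mathcomp Require Import qfpoly.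
Lemma root_ext (F : fieldType) (p : {poly F}) : (1 < size p)%N ->
  exists (K : fieldType) (f : {rmorphism F -> K}) (x : K), root (map_poly f p) x.
Proof.
move=> sp; have [q [iq mq dq]] := irr_factor (leqnn _) sp.
have hI : monic_irreducible_poly q by [].
pose K : fieldType := {poly %/ q with hI}.
exists K. exists (qpolyC q : {rmorphism F -> K}).
exists (in_qpoly q 'X).
have := in_qpoly_comp_horner q q 'X.
rewrite comp_polyXr => e.
have e0 : in_qpoly q q = 0.
  apply: val_inj => /=; rewrite (mk_monicE hI); exact: Pdiv.RingMonic.rmodpp.
have [r ->] := dvdpP _ _ dq.
rewrite rmorphM /= /root hornerM.
rewrite -e e0 mulr0 //.
Qed.
Lemma quad_rel (F : fieldType) n (g : 'M[F]_n.+1) : size (mxminpoly g) = 3%N ->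
  exists a b : F, g *m g = a *: g + b%:M.
Proof.
move=> s3; set p := mxminpoly g.
have h : horner_mx g p = 0 := mx_root_minpoly g.
have m := mxminpoly_monic g.
have c2 : p`_2 = 1 by move/monicP: m; rewrite /lead_coef -/p s3.
exists (- p`_1), (- p`_0).
rewrite -(coefK p) poly_def s3 !big_ord_recr big_ord0 /= add0r in h.
move: h; rewrite !rmorphD /= c2 !linearZ /= rmorph1 rmorphXn /= horner_mx_X.
have -> : horner_mx g 'X^2 = g *m g.
  by rewrite rmorphXn /= horner_mx_X expr2.
rewrite scale1r expr1 => /eqP. rewrite addrC addr_eq0 => /eqP ->.
rewrite opprD addrC -!scaleNr; congr (_ + _); exact: scalemx1.
Qed.
Lemma ac0 (V : zmodType) (x t : V) : x + t - x = t.
Proof. by rewrite addrC addKr. Qed.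
Lemma ac1 (V : zmodType) (x y z w v : V) : x + y + z - w - x = z + (v + y) - w - v.
Proof.
rewrite -(addrA x y) -(addrA x) ac0.
by rewrite (addrC v y) addrA [RHS]addrAC addrK (addrC y z).
Qed.

Lemma ac2 (V : zmodType) (x y z w : V) : y = x + y - z - w - x + z + w.
Proof.
by rewrite [x + y - z - w - x]addrAC [x + y - z - x]addrAC ac0 addrAC subrK subrK.
Qed.

Lemma commZ (R : comNzRingType) m (A B : 'M[R]_m.+1) (a b c : R) :
  A *m A = a *: A + b%:M ->
  A *m (A *m B + B *m A - c *: A - a *: B) = (A *m B + B *m A - c *: A - a *: B) *m A.
Proof.
rewrite !mulmxE => hA.
have e1 : A * (A * B) = a *: (A * B) + b *: B.
  by rewrite mulrA hA mulrDl -scalerAl -[b%:M * B]/(b%:M *m B) mul_scalar_mx.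
have e2 : B * A * A = a *: (B * A) + b *: B.
  by rewrite -mulrA hA mulrDr -scalerAr -[B * b%:M]/(B *m b%:M) mul_mx_scalar.
rewrite !(mulrDr, mulrDl, mulrN, mulNr) -!scalerAr -!scalerAl e1 e2 !mulrA.
exact: ac1.
Qed.

Lemma inv_sub (K : fieldType) m (W g : 'M[K]_m) : g \in unitmx ->
  (W *m g <= W)%MS -> (W *m invmx g <= W)%MS.
Proof.
move=> ug s.
have : (W <= W *m g)%MS.
  have := mxrank_leqif_sup s; rewrite mxrankMfree ?row_free_unit // => [[_ <-]].
  exact: eqxx.
by move/(submxMr (invmx g)); rewrite -mulmxA mulmxV // mulmx1.
Qed.

Lemma inv_of (K : fieldType) m (A B W : 'M[K]_m) : A \in unitmx -> B \in unitmx ->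
  (W *m A <= W)%MS -> (W *m B <= W)%MS -> gen_invariant [:: A; B] W.
Proof.
move=> uA uB sA sB h; elim => [|g h' gS _ IH|g h' gS _ IH].
- by rewrite mulmx1.
- rewrite mulmxA; apply: submx_trans IH; apply: submxMr.
  by move: gS; rewrite !inE => /orP[] /eqP ->.
- rewrite mulmxA; apply: submx_trans IH; apply: submxMr.
  by move: gS; rewrite !inE => /orP[] /eqP ->; apply: inv_sub.
Qed.

Lemma subB (K : fieldType) m1 m2 n (X Y : 'M[K]_(m1, n)) (C : 'M[K]_(m2, n)) :
  (X <= C)%MS -> (Y <= C)%MS -> (X - Y <= C)%MS.
Proof. by move=> hX hY; apply: addmx_sub => //; rewrite eqmx_opp. Qed.

Lemma key (K : fieldType) m (A B : 'M[K]_m.+1) (a b c d l u : K) :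
  (2 < m)%N -> A \in unitmx -> B \in unitmx ->
  A *m A = a *: A + b%:M -> B *m B = c *: B + d%:M ->
  eigenvalue (A *m B + B *m A - c *: A - a *: B) l -> eigenvalue A u ->
  ~ gen_irreducible [:: A; B].
Proof.
move=> hm uA uB hA hB hl hu [_ irr].
set Z := A *m B + B *m A - c *: A - a *: B in hl.
have cA : A *m Z = Z *m A := commZ B c hA.
have cB : B *m Z = Z *m B.
  have -> : Z = B *m A + A *m B - a *: B - c *: A.
    by rewrite /Z (addrC (B *m A)) [RHS]addrAC.
  exact: (commZ A a hB).
case: (eqVneq Z (l%:M)) => [eZ | nZ].
- have [v hvA v0] := eigenvalueP hu.
  set C := col_mx v (v *m B).
  have hv1 : (v <= C)%MS by have := submx_refl C; rewrite col_mx_sub => /andP[].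
  have hv2 : (v *m B <= C)%MS by have := submx_refl C; rewrite col_mx_sub => /andP[].
  have eBA : B *m A = l%:M - A *m B + c *: A + a *: B.
    by rewrite -eZ /Z; apply: ac2.
  case: (irr <<C>>%MS).
  + apply: inv_of => //; rewrite !(eqmxMr _ (genmxE _)) genmxE mul_col_mx col_mx_sub.
    * apply/andP; split; first by rewrite hvA scalemx_sub.
      rewrite -mulmxA eBA !mulmxDr mulmxN mul_mx_scalar -!scalemxAr mulmxA hvA -scalemxAl.
      by rewrite !addmx_sub ?eqmx_opp ?scalemx_sub.
    * apply/andP; split=> //.
      rewrite -mulmxA hB mulmxDr mul_mx_scalar -scalemxAr.
      by rewrite !addmx_sub ?scalemx_sub.
  + move=> W0; have : (v <= <<C>>)%MS by rewrite genmxE.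
    by rewrite W0 submx0 (negbTE v0).
  + rewrite /row_full genmxE => /eqP h.
    have := rank_leq_row C; rewrite h => h2.
    by move: h2; rewrite ltnS leqNgt (ltnW hm).
- case: (irr (eigenspace Z l)).
  + apply: inv_of => //; apply/eigenspaceP.
    * by rewrite -mulmxA cA mulmxA (eigenspaceP (submx_refl _)) scalemxAl.
    * by rewrite -mulmxA cB mulmxA (eigenspaceP (submx_refl _)) scalemxAl.
  + by move=> e; move: hl; rewrite /eigenvalue e eqxx.
  + rewrite -sub1mx => /eigenspaceP; rewrite mul1mx scalemx1 => eZ.
    by rewrite eZ eqxx in nZ.
Qed.

Theorem mainTheorem11 (F : fieldType) (n : nat) (hn : (4 <= n.+1)%N)
    (g1 g2 : 'M[F]_n.+1)
    (hg1 : g1 \in unitmx) (hg2 : g2 \in unitmx)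
    (hm1 : size (mxminpoly g1) = 3%N) (hm2 : size (mxminpoly g2) = 3%N) :
  ~ gen_abs_irreducible [:: g1; g2].
Proof.
move=> habs.
have [a1 [b1 h1]] := quad_rel hm1; have [a2 [b2 h2]] := quad_rel hm2.
set z := g1 *m g2 + g2 *m g1 - a2 *: g1 - a1 *: g2.
have [K1 [f1 [u hu]]] : exists (K : fieldType) (f : {rmorphism F -> K}) (x : K),
    root (map_poly f (char_poly g1)) x by apply: root_ext; rewrite size_char_poly.
have [K2 [f2 [l hl]]] : exists (K : fieldType) (f : {rmorphism K1 -> K}) (x : K),
    root (map_poly f (map_poly f1 (char_poly z))) x.
  by apply: root_ext; rewrite size_map_poly size_char_poly.
pose f : {rmorphism F -> K2} := f2 \o f1.
have := habs K2 f; rewrite /=.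
have mf : forall g : 'M[F]_n.+1, map_mx f g = map_mx f2 (map_mx f1 g).
  by move=> g; rewrite map_mx_comp.
apply: (@key _ _ _ _ (f a1) (f b1) (f a2) (f b2) l (f2 u)).
- by [].
- by rewrite map_unitmx.
- by rewrite map_unitmx.
- by rewrite -map_mxM h1 map_mxD map_mxZ map_scalar_mx.
- by rewrite -map_mxM h2 map_mxD map_mxZ map_scalar_mx.
- rewrite -!map_mxM -!map_mxZ -map_mxD -!map_mxB -/z.
  by rewrite eigenvalue_root_char mf -!map_char_poly.
- by rewrite eigenvalue_root_char mf -!map_char_poly; apply: rmorph_root.
Qed.
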